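(* Let $n\ge1$ and $\alpha=\beta=1$. The stationary measure of the $n$-site open-boundary TASEP is given by $$\mathbb{P}^{\mathrm{st}}_n\{\mathcal{C}\}=\frac{|R^{-1}\{\mathcal{C}\}|}{|\mathcal{T}_n|}.$$ Equivalently, for every $\mathcal{C}\in\{\bullet,\circ\}^n$, $$|R^{-1}\{\mathcal{C}\}|\sum_{\mathcal{C}'}W(\mathcal{C}\to\mathcal{C}')=\sum_{\mathcal{C}'}|R^{-1}\{\mathcal{C}'\}|\,W(\mathcal{C}'\to\mathcal{C}).$$
   Context: Open-boundary TASEP on $n$ sites: this is the continuous-time Markov chain on $\{\bullet,\circ\}^n$ (strings of length $n$, where $\bullet$ denotes a particle and $\circ$ a hole). Its transition rates are as follows, with $\mathcal{A},\mathcal{A}'$ arbitrary strings: - $W(\circ\mathcal{A}\to\bullet\mathcal{A})=\alpha$; - $W(\mathcal{A}\bullet\to\mathcal{A}\circ)=\beta$; - $W(\mathcal{A}\bullet\circ\mathcal{A}'\to\mathcal{A}\circ\bullet\mathcal{A}')=1$; - $W(\mathcal{C}\to\mathcal{C}')=0$ for all other pairs. A plane binary tree is a finite rooted tree in which every vertex is either an endpoint (a leaf, with no children) or has exactly two children, an ordered left child and right child. Every non-root vertex is thus either a left descendent or a right descendent of its parent. The endpoints are ordered from left to right in the planar order. $\mathcal{T}_n$ denotes the set of plane binary trees with exactly $n+2$ endpoints. The reduced configuration of $T\in\mathcal{T}_n$ is $R(T)=(t_1,\dots,t_n)\in\{\bullet,\circ\}^n$. Here $t_k=\bullet$ if the $(k+1)$-th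 endpoint from the left is a left child, and $t_k=\circ$ if it is a right child. The leftmost and rightmost endpoints are ignored. *)

(* Defs.v *)
From mathcomp Require Import all_boot.
From Stdlib Require List.
Set Implicit Arguments. Unset Strict Implicit. Unset Printing Implicit Defensive.

(* Configurations: seq bool, true = particle (bullet), false = hole (circ). *)

Inductive ptree : Type := Leaf : ptree | Node : ptree -> ptree -> ptree.

Fixpoint nleaves (t : ptree) : nat :=
  match t with Leaf => 1 | Node l r => nleaves l + nleaves r end.

(* For a subtree whose root is a left child (d = true) or right child
   (d = false), the list, left to right, of the "is a left child" flags of its
   endpoints. *)
Fixpoint leaf_dirs (t : ptree) (d : bool) : seq bool :=
  match t with
  | Leaf => [:: d]
  | Node l r => leaf_dirs l true ++ leaf_dirs r false
  end.

(* Flags of all endpoints of a tree (root is not a child of anything; trees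
   considered here have a non-leaf root). *)
Definition endpoint_dirs (t : ptree) : seq bool :=
  match t with Leaf => [::] | Node l r => leaf_dirs l true ++ leaf_dirs r false end.

Definition redconf (t : ptree) : seq bool :=
  let s := endpoint_dirs t in take (size s).-2 (behead s).

Definition inT (n : nat) (t : ptree) : Prop := nleaves t = n.+2.

Definition enumerates (P : ptree -> Prop) (l : list ptree) : Prop :=
  List.NoDup l /\ (forall t, List.In t l <-> P t).

(* TASEP transitions with alpha = beta = 1: list of configurations reachable
   from C by one move (each move has rate 1). *)
Definition entry_moves (C : seq bool) : seq (seq bool) :=
  if C is false :: A then [:: true :: A] else [::].

Definition exit_moves (C : seq bool) : seq (seq bool) :=
  if (size C > 0) && last false C then [:: set_nth false C (size C).-1 false]
  else [::].

Definition hop_moves (C : seq bool) : seq (seq bool) :=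
  [seq set_nth false (set_nth false C i false) i.+1 true
     | i <- iota 0 (size C).-1 & nth false C i && ~~ nth false C i.+1].

Definition moves (C : seq bool) : seq (seq bool) :=
  entry_moves C ++ exit_moves C ++ hop_moves C.

(* Transition rate W(C -> C') for alpha = beta = 1 (distinct moves give
   distinct targets, and no move fixes C). *)
Definition W (C C' : seq bool) : nat := (C' \in moves C).

(* Main.v *)
Require Import Defs.
From HB Require Import structures.
From mathcomp Require Import all_boot zify.
From Stdlib Require List.
Set Implicit Arguments. Unset Strict Implicit. Unset Printing Implicit Defensive.

Fixpoint ptree_eqb (s t : ptree) : bool :=
  match s, t with
  | Leaf, Leaf => true
  | Node a b, Node c d => ptree_eqb a c && ptree_eqb b d
  | _, _ => false
  end.

Lemma ptree_eqP : Equality.axiom ptree_eqb.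
Proof.
elim=> [|a IHa b IHb] [|c d] /=; try by constructor.
by apply: (iffP andP) => [[/IHa -> /IHb ->]|[<- <-]]; split; [apply/IHa|apply/IHb].
Qed.

HB.instance Definition _ := hasDecEq.Build ptree ptree_eqP.

Definition nds (f : bool -> seq bool -> seq ptree) (w : seq bool) : seq ptree :=
  flatten [seq [seq Node l r | l <- f true (take i w), r <- f false (drop i w)]
          | i <- iota 1 (size w).-1].

Fixpoint trs (k : nat) (d : bool) (w : seq bool) : seq ptree :=
  match k with
  | 0 => [::]
  | k.+1 => (if w == [:: d] then [:: Leaf] else [::]) ++ nds (trs k) w
  end.

Lemma leaf_dirs_nil t d : leaf_dirs t d != [::].
Proof. by elim: t d => [|l IHl r IHr] d //=; case: (leaf_dirs l true) (IHl true). Qed.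

Lemma size_leaf_dirs t d : size (leaf_dirs t d) = nleaves t.
Proof. by elim: t d => [|l IHl r IHr] d //=; rewrite size_cat IHl IHr. Qed.

Lemma size_leaf_dirs_gt0 t d : 0 < size (leaf_dirs t d).
Proof. by rewrite lt0n size_eq0 leaf_dirs_nil. Qed.

Lemma trs_sound k d w t : t \in trs k d w -> leaf_dirs t d = w.
Proof.
elim: k d w t => [|k IH] d w t //=; rewrite mem_cat => /orP[].
  by case: eqP => // -> ; rewrite inE => /eqP ->.
case/flattenP=> s /mapP[i _ ->] /allpairsP[[l r] /= [hl hr ->]] /=.
by rewrite (IH _ _ _ hl) (IH _ _ _ hr) cat_take_drop.
Qed.

Lemma trs_complete k d w t : size w <= k -> leaf_dirs t d = w -> t \in trs k d w.
Proof.
elim: k d w t => [|k IH] d w t.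
  by rewrite leqn0 size_eq0 => /eqP -> /eqP; rewrite (negbTE (leaf_dirs_nil _ _)).
move=> hk; case: t => [|l r] /= hw; rewrite mem_cat.
  by rewrite -hw eqxx inE.
apply/orP; right; apply/flattenP.
set i := size (leaf_dirs l true).
have hsz : size w = i + size (leaf_dirs r false) by rewrite -hw size_cat.
exists [seq Node l0 r0 | l0 <- trs k true (take i w), r0 <- trs k false (drop i w)].
  apply/mapP; exists i => //; rewrite mem_iota hsz.
  have := size_leaf_dirs_gt0 l true; have := size_leaf_dirs_gt0 r false.
  rewrite -/i; case: (size (leaf_dirs r false)) => // m _ ->.
  by rewrite addnS /= add1n ltnS leq_addr.
apply/allpairsP; exists (l, r); split => //=.
  apply: IH; first by rewrite size_take; apply: leq_trans (geq_minl _ _) _;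
     rewrite -ltnS; apply: leq_trans hk; rewrite hsz -addn1 leq_add2l size_leaf_dirs_gt0.
  by rewrite -hw take_size_cat.
apply: IH; last by rewrite -hw drop_size_cat.
rewrite size_drop hsz addKn -ltnS; apply: leq_trans hk.
by rewrite hsz -add1n leq_add2r size_leaf_dirs_gt0.
Qed.

Lemma flatten_uniq_key (I : eqType) (T : eqType) (F : I -> seq T) (key : T -> I) (s : seq I) :
  uniq s -> (forall i, uniq (F i)) -> (forall i x, i \in s -> x \in F i -> key x = i) ->
  uniq (flatten [seq F i | i <- s]).
Proof.
move=> us uF; elim: s us => //= i s IH /andP[ni us] kF.
rewrite cat_uniq uF IH //; last by move=> j x js; apply: kF; rewrite inE js orbT.
rewrite andbT; apply/hasPn => x /flattenP[y /mapP[j js ->] xj].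
apply/negP => xi; move: ni.
by rewrite -(kF _ _ (mem_head _ _) xi) (kF j x) // ?js // inE js orbT.
Qed.

Lemma trs_uniq k d w : uniq (trs k d w).
Proof.
elim: k d w => [|k IH] d w //=; rewrite cat_uniq; apply/and3P; split.
- by case: eqP.
- apply/hasPn => t /flattenP[s /mapP[i _ ->] /allpairsP[[l r] [_ _ ->]]].
  by case: eqP => //; rewrite inE.
- apply: (flatten_uniq_key (key := fun t => if t is Node l _ then size (leaf_dirs l true) else 0)).
  + exact: iota_uniq.
  + move=> i; apply: allpairs_uniq; [exact: IH | exact: IH |].
    by move=> [a b] [c e] _ _ /= [-> ->].
  + move=> i t; rewrite mem_iota => /andP[h1 h2] /allpairsP[[l r] [/= hl _ ->]].
    rewrite (trs_sound hl) size_take.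
    case: (size w) h2 => [|m] /=; first lia.
    by move=> h; rewrite ifT //; lia.
Qed.

Definition N d w := size (trs (size w) d w).

Lemma N_eq k d w : size w <= k -> size (trs k d w) = N d w.
Proof.
move=> hk; apply: perm_size; apply: uniq_perm; try exact: trs_uniq.
move=> t; apply/idP/idP => /trs_sound h; apply: trs_complete => //.
Qed.

Lemma N0 d w : (forall t, leaf_dirs t d != w) -> N d w = 0.
Proof.
move=> h; rewrite /N; case E: (trs _ d w) => [|t s] //.
have ht : t \in trs (size w) d w by rewrite E mem_head.
by have := trs_sound ht => /eqP; rewrite (negbTE (h t)).
Qed.

Lemma sumn_map_big (T : Type) (s : seq T) (g : T -> nat) : sumn (map g s) = \sum_(i <- s) g i.
Proof. by elim: s => [|a s IH] /=; rewrite ?big_nil ?big_cons ?IH. Qed.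

Definition P w := \sum_(i <- iota 1 (size w).-1) N true (take i w) * N false (drop i w).

Lemma N_rec d w : N d w = (w == [:: d]) + P w.
Proof.
rewrite /N /P; case E: (size w) => [|k].
  by move/eqP: E; rewrite size_eq0 => /eqP ->; rewrite big_nil.
rewrite /= size_cat; congr (_ + _); first by case: eqP.
rewrite /nds size_flatten /shape -map_comp sumn_map_big E /=.
rewrite !big_seq; apply: eq_bigr => i; rewrite mem_iota => /andP[h1 h2] /=.
rewrite size_allpairs !N_eq // ?size_take ?size_drop; rewrite E; try case: ifP => ?; lia.
Qed.

Lemma head_leaf_dirs t : head false (leaf_dirs t true) = true.
Proof.
elim: t => [|l IHl r _] //=.
by case: (leaf_dirs l true) (leaf_dirs_nil l true) IHl.
Qed.

Lemma last_leaf_dirs t : last false (leaf_dirs t false) = false.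
Proof.
elim: t => [|l _ r IHr] //=; rewrite last_cat.
by case: (leaf_dirs r false) (leaf_dirs_nil r false) IHr => // a s _ /=.
Qed.

Lemma NT_F x : N true (false :: x) = 0.
Proof. apply: N0 => t; apply/eqP => h; have := head_leaf_dirs t; by rewrite h. Qed.

Lemma NF_T x : N false (x ++ [:: true]) = 0.
Proof. apply: N0 => t; apply/eqP => h; have := last_leaf_dirs t; by rewrite h last_cat. Qed.

Lemma eq1F (s : seq bool) d : 1 < size s -> (s == [:: d]) = false.
Proof. by case: s => [|a [|b s]] //= _; apply/eqP; case. Qed.

Lemma P_F x : P (false :: x) = 0.
Proof.
rewrite /P big_seq big1 // => i; rewrite mem_iota => /andP[h1 _].
by case: i h1 => // i _; rewrite /= NT_F.
Qed.

Lemma P_T x : P (x ++ [:: true]) = 0.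
Proof.
rewrite /P big_seq big1 // => i; rewrite mem_iota size_cat addn1 /= => /andP[h1 h2].
rewrite drop_cat; case: ltnP => hi; first by rewrite (NF_T (drop i x)) muln0.
change nat in i.
have -> : i = size x by lia.
by rewrite subnn /= (NF_T [::]) muln0.
Qed.

Lemma NT_T u : N true (u ++ [:: true]) = (u == [::]).
Proof.
rewrite N_rec P_T addn0; case: u => [|a u] //=.
by rewrite eq1F //= size_cat addn1.
Qed.

Lemma NF_F v : N false (false :: v) = (v == [::]).
Proof. by rewrite N_rec P_F addn0. Qed.

Lemma sum_pivot (f : seq bool -> seq bool -> nat) x c y :
 \sum_(i <- iota 1 (size (x ++ c :: y)).-1) f (take i (x ++ c::y)) (drop i (x ++ c::y)) =
 \sum_(i <- iota 1 (size x)) f (take i x) (drop i x ++ c :: y) +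
 \sum_(j <- iota 0 (size y)) f (x ++ c :: take j y) (drop j y).
Proof.
rewrite size_cat /= addnS /= iotaD big_cat /=; congr (_ + _).
  rewrite !big_seq; apply: eq_bigr => i; rewrite mem_iota => /andP[_ h].
  rewrite takel_cat; last by lia.
  rewrite drop_cat; case: ltnP => // hi.
  have -> : i = size x by lia.
  by rewrite subnn drop_size.
rewrite -[1 + size x]addn0 iotaDl big_map; apply: eq_bigr => j _.
rewrite take_cat drop_cat ifF; last by lia.
rewrite ifF; last by lia.
by have -> : 1 + size x + j - size x = j.+1 by lia.
Qed.

Lemma PA_NA u v d :
  P (u ++ true :: false :: v) = ((u == [::]) && (v == [::])) + P (u ++ true :: v) + P (u ++ false :: v) ->
  N d (u ++ true :: false :: v) = N d (u ++ true :: v) + N d (u ++ false :: v).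
Proof.
rewrite !N_rec => ->; rewrite eq1F; last by rewrite size_cat /=; lia.
have key : (u ++ true :: v == [:: d]) + (u ++ false :: v == [:: d]) = (u == [::]) && (v == [::]).
  case: u => [|a u] /=.
    case: v => [|b v] /=; first by case: d.
    by rewrite !eq1F.
  by rewrite !eq1F //= size_cat /=; lia.
rewrite -key; lia.
Qed.

Lemma PA_aux m : forall u v, size u + size v < m ->
  P (u ++ true :: false :: v) = ((u == [::]) && (v == [::])) + P (u ++ true :: v) + P (u ++ false :: v).
Proof.
elim: m => [|m IH] u v hm; first by [].
rewrite /P (sum_pivot (fun a b => N true a * N false b) u true (false :: v)).
rewrite (sum_pivot (fun a b => N true a * N false b) u true v).
rewrite (sum_pivot (fun a b => N true a * N false b) u false v) /= big_cons /=.
have -> : iota 1 (size v) = map (addn 1) (iota 0 (size v)) by rewrite -(iotaDl 1 0).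
rewrite big_map.
have h1 : \sum_(i <- iota 1 (size u)) N true (take i u) * N false (drop i u ++ [:: true, false & v]) =
  \sum_(i <- iota 1 (size u)) N true (take i u) * N false (drop i u ++ true :: v) +
  \sum_(i <- iota 1 (size u)) N true (take i u) * N false (drop i u ++ false :: v).
  rewrite -big_split !big_seq; apply: eq_bigr => i; rewrite mem_iota => /andP[hi1 hi2].
  change nat in i.
  rewrite /= -mulnDr; congr (_ * _); apply: PA_NA; apply: IH.
  rewrite size_drop; lia.
have h3 : \sum_(j <- iota 0 (size v)) N true (u ++ true :: take (1 + j) (false :: v)) * N false (drop (1 + j) (false :: v)) =
  \sum_(j <- iota 0 (size v)) N true (u ++ true :: take j v) * N false (drop j v) +
  \sum_(j <- iota 0 (size v)) N true (u ++ false :: take j v) * N false (drop j v).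
  rewrite -big_split !big_seq; apply: eq_bigr => j; rewrite mem_iota => /andP[hj1 hj2].
  change nat in j.
  rewrite /= -mulnDl add0n; congr (_ * _); apply: PA_NA; apply: IH.
  rewrite add0n in hj2; rewrite size_take hj2; move: hm; rewrite ltnS => hm; apply: leq_trans hm; by rewrite ltn_add2l.
rewrite h1 h3 (NT_T u) (NF_F v) mulnb.
set c := nat_of_bool _.
set A := \sum_(i <- _) N true (take i u) * N false (drop i u ++ true :: v).
set B := \sum_(i <- _) N true (take i u) * N false (drop i u ++ false :: v).
set D := \sum_(j <- _) N true (u ++ true :: take j v) * N false (drop j v).
set E := \sum_(j <- _) N true (u ++ false :: take j v) * N false (drop j v).
lia.
Qed.

Lemma PA u v :
  P (u ++ true :: false :: v) = ((u == [::]) && (v == [::])) + P (u ++ true :: v) + P (u ++ false :: v).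
Proof. exact: (@PA_aux (size u + size v).+1). Qed.

Lemma NA u v d :
  N d (u ++ true :: false :: v) = N d (u ++ true :: v) + N d (u ++ false :: v).
Proof. exact: PA_NA (PA u v). Qed.

Definition G (c : seq bool) := P (true :: rcons c false).

Lemma rcons_neq0 (s : seq bool) x : (rcons s x == [::]) = false.
Proof. by case: s. Qed.

Lemma G_TF u v : G (u ++ true :: false :: v) = G (u ++ true :: v) + G (u ++ false :: v).
Proof.
rewrite /G !rcons_cat /=.
have := PA (true :: u) (rcons v false); rewrite /= => ->; by [].
Qed.

Lemma G_F v : G (false :: v) = G v.
Proof.
rewrite /G /=.
have := PA [::] (rcons v false); rewrite /= rcons_neq0 /= => ->.
by rewrite P_F addn0.
Qed.

Lemma G_T u : G (rcons u true) = G u.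
Proof.
rewrite /G.
have -> : true :: rcons (rcons u true) false = (true :: u) ++ [:: true, false & [::]].
  by rewrite -cats1 -cats1 /= -catA.
rewrite PA /= (P_T (true :: u)) cats1.
by [].
Qed.

Lemma head_cat_ne (s1 s2 : seq bool) x : s1 != [::] -> head x (s1 ++ s2) = head x s1.
Proof. by case: s1. Qed.

Lemma fib_char n (C : seq bool) t : size C = n ->
  (inT n t /\ redconf t = C) <-> leaf_dirs t false = true :: rcons C false.
Proof.
move=> hC; split.
  case: t => [|l r]; first by rewrite /inT /=; case.
  rewrite /inT /redconf /endpoint_dirs => -[hn].
  have hs : size (leaf_dirs (Node l r) false) = n.+2 by rewrite size_leaf_dirs.
  have hh : head false (leaf_dirs (Node l r) false) = true.
    by rewrite /= head_cat_ne ?leaf_dirs_nil // head_leaf_dirs.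
  have hl := last_leaf_dirs (Node l r).
  move: hs hh hl; rewrite /=.
  case: (leaf_dirs l true ++ leaf_dirs r false) => [|x s] //= [hs] -> .
  case/lastP: s hs => [|s y] //; rewrite size_rcons last_rcons => -[hs] -> /=.
  by rewrite -cats1 takel_cat // take_size => <-; rewrite cats1.
case: t => [|l r] /=.
  by case=> _; case: C hC => [|? ?] //; case: n.
move=> h; rewrite /inT /redconf /endpoint_dirs /=.
have hs : nleaves (Node l r) = n.+2 by rewrite -(size_leaf_dirs _ false) /= h /= size_rcons hC.
split; first by [].
rewrite h /= size_rcons -cats1 takel_cat ?hC //= -hC take_size //.
Qed.

Lemma inP (T : eqType) (x : T) (s : seq T) : List.In x s <-> x \in s.
Proof.
elim: s => [|a s IH] //=; rewrite inE; split.
  by case=> [->|/IH ->]; rewrite ?eqxx ?orbT.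
by case/orP => [/eqP ->|/IH]; [left | right].
Qed.

Lemma uniq_NoDup (T : eqType) (s : seq T) : uniq s -> List.NoDup s.
Proof.
elim: s => [|a s IH] /=; first by constructor.
case/andP => ha hs; constructor; last exact: IH.
by move/inP; apply/negP.
Qed.

Lemma size_length (T : Type) (s : seq T) : size s = List.length s.
Proof. by elim: s => //= a s ->. Qed.

Lemma length_fib n (fib : n.-tuple bool -> list ptree)
  (hfib : forall C : n.-tuple bool,
            enumerates (fun t => inT n t /\ redconf t = tval C) (fib C))
  (C : n.-tuple bool) : List.length (fib C) = G (tval C).
Proof.
set w := true :: rcons (tval C) false.
have -> : G (tval C) = N false w by rewrite N_rec eq1F ?add0n //= size_rcons.
rewrite /N -size_length.
have [hnd hin] := hfib C.
have hC : size (tval C) = n by rewrite size_tuple.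
have mem : forall t, List.In t (fib C) <-> List.In t (trs (size w) false w).
  move=> t; rewrite hin (fib_char _ hC) inP; split.
    by move=> h; apply: trs_complete.
  by move/trs_sound.
apply: PeanoNat.Nat.le_antisymm.
  apply: List.NoDup_incl_length => // t /mem //.
apply: List.NoDup_incl_length; first exact: uniq_NoDup (trs_uniq _ _ _).
by move=> t /mem.
Qed.

Definition hopset (c : seq bool) i := set_nth false (set_nth false c i false) i.+1 true.
Definition hopb (c : seq bool) i := set_nth false (set_nth false c i true) i.+1 false.
Definition rem_at (c : seq bool) i := take i c ++ drop i.+1 c.

Lemma set_nth_cat (u s : seq bool) x b : set_nth false (u ++ x :: s) (size u) b = u ++ b :: s.
Proof. by elim: u => [|a u IH] //=; rewrite IH. Qed.

Lemma nth_cat_sz (u s : seq bool) x : nth false (u ++ x :: s) (size u) = x.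
Proof. by rewrite nth_cat ltnn subnn. Qed.

Lemma nth_cat_sz1 (u s : seq bool) x y : nth false (u ++ x :: y :: s) (size u).+1 = y.
Proof. by rewrite -cat_rcons -(size_rcons u x) nth_cat_sz. Qed.

Lemma hopset_cat (u s : seq bool) x y : hopset (u ++ x :: y :: s) (size u) = u ++ false :: true :: s.
Proof. by rewrite /hopset set_nth_cat -cat_rcons -(size_rcons u false) set_nth_cat cat_rcons. Qed.

Lemma hopb_cat (u s : seq bool) x y : hopb (u ++ x :: y :: s) (size u) = u ++ true :: false :: s.
Proof. by rewrite /hopb set_nth_cat -cat_rcons -(size_rcons u true) set_nth_cat cat_rcons. Qed.

Lemma rem_at_cat (u s : seq bool) x : rem_at (u ++ x :: s) (size u) = u ++ s.
Proof. by rewrite /rem_at take_size_cat // -cat_rcons drop_size_cat ?size_rcons. Qed.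

Lemma rem_at_cat1 (u s : seq bool) x y : rem_at (u ++ x :: y :: s) (size u).+1 = u ++ x :: s.
Proof. by rewrite -cat_rcons -(size_rcons u x) rem_at_cat cat_rcons. Qed.

Lemma decomp1 (c : seq bool) j : j < size c -> c = take j c ++ nth false c j :: drop j.+1 c.
Proof. by move=> h; rewrite -drop_nth // cat_take_drop. Qed.

Lemma decomp2 (c : seq bool) i : i.+1 < size c ->
  c = take i c ++ nth false c i :: nth false c i.+1 :: drop i.+2 c.
Proof. by move=> h; rewrite -drop_nth // -drop_nth ?cat_take_drop // ltnW. Qed.

Lemma step c i : i.+1 < size c ->
 (~~ nth false c i && nth false c i.+1) * G (hopb c i) + nth false c i * G (rem_at c i)
   + ~~ nth false c i.+1 * G (rem_at c i.+1)
 = G c * (nth false c i && ~~ nth false c i.+1) + ~~ nth false c i * G (rem_at c i)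
   + nth false c i.+1 * G (rem_at c i.+1).
Proof.
move=> h; have hu : size (take i c) = i by rewrite size_takel //; apply: leq_trans (leqnSn _) (ltnW h).
move: (decomp2 h) hu; move: (take i c) (nth false c i) (nth false c i.+1) (drop i.+2 c).
move=> u x y v -> <-.
rewrite hopb_cat rem_at_cat rem_at_cat1 G_TF.
by case: x; case: y => /=; rewrite ?G_TF !mul0n ?mul1n ?muln0 ?muln1 ?add0n ?addn0 // addnC.
Qed.

Lemma left_bd c : 0 < size c ->
  G c * ~~ nth false c 0 = ~~ nth false c 0 * G (rem_at c 0) /\
  nth false c 0 * G (set_nth false c 0 false) = nth false c 0 * G (rem_at c 0).
Proof.
case: c => [|x s] // _; rewrite /rem_at /= drop0.
by case: x => /=; rewrite ?G_F; lia.
Qed.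

Lemma right_bd c m : size c = m.+1 ->
  G c * nth false c m = nth false c m * G (rem_at c m) /\
  ~~ nth false c m * G (set_nth false c m true) = ~~ nth false c m * G (rem_at c m).
Proof.
case/lastP: c => [|u x] //; rewrite size_rcons => -[<-].
rewrite -cats1 nth_cat_sz set_nth_cat rem_at_cat cats0 cats1.
by case: x => /=; rewrite ?cats1 ?G_T; split; lia.
Qed.

Lemma telescope (p q e f : nat -> nat) m :
  (forall i, i < m -> e i + p i + q i.+1 = f i + q i + p i.+1) ->
  p 0 + q m + \sum_(i <- iota 0 m) e i = q 0 + p m + \sum_(i <- iota 0 m) f i.
Proof.
elim: m => [|m IH] H; first by rewrite !big_nil; lia.
rewrite -addn1 iotaD add0n !big_cat /= !big_cons !big_nil.
have := IH (fun i hi => H i (ltnW hi)); have := H m (ltnSn m).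
rewrite addn1; lia.
Qed.

Lemma nth_hopset c i k : nth false (hopset c i) k =
  if k == i.+1 then true else if k == i then false else nth false c k.
Proof. by rewrite /hopset nth_set_nth /= nth_set_nth /=. Qed.

Lemma mem_hop c t : t \in hop_moves c ->
  exists2 i, i.+1 < size c & [/\ nth false c i, ~~ nth false c i.+1 & t = hopset c i].
Proof.
rewrite /hop_moves => /mapP[i]; rewrite mem_filter mem_iota => /and3P[/andP[h1 h2] _ hi] ->.
exists i; last by [].
by move: hi; rewrite add0n; case: (size c) => // m; rewrite /= ltnS.
Qed.

Lemma mem_exit c t : t \in exit_moves c ->
  [/\ 0 < size c, nth false c (size c).-1 & t = set_nth false c (size c).-1 false].
Proof.
rewrite /exit_moves; case: ifP => // /andP[h1 h2]; rewrite inE => /eqP ->.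
by rewrite nth_last.
Qed.

Lemma moves_size c t : t \in moves c -> size t = size c.
Proof.
rewrite /moves !mem_cat => /or3P[].
- by case: c => [|[] s] //=; rewrite inE => /eqP ->.
- case/mem_exit => h _ ->; rewrite size_set_nth prednK //; exact: maxnn.
- case/mem_hop => i hi [_ _ ->]; rewrite !size_set_nth (maxn_idPr (ltnW hi)) (maxn_idPr hi) //.
Qed.

Lemma moves_uniq c : uniq (moves c).
Proof.
rewrite /moves cat_uniq; apply/and3P; split.
- by case: c => [|[] s].
- case: c => [|x s] //; case: x; first by apply/hasPn.
  apply/hasPn => t; rewrite mem_cat inE => /orP[/mem_exit [_ _ ht]|/mem_hop [i _ [_ _ ht]]];
    apply/negP => /eqP et; move: (congr1 (nth false ^~ 0) ht); rewrite et.
    by rewrite nth_set_nth /= if_same.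
  by rewrite nth_hopset /=; case: ifP => _ //; case: ifP.
rewrite cat_uniq; apply/and3P; split.
- by rewrite /exit_moves; case: ifP.
- apply/hasPn => t /mem_hop [i hi [_ _ ht]]; apply/negP => /mem_exit [h1 h2 et].
  move: (congr1 (nth false ^~ (size c).-1) ht); rewrite et nth_set_nth /= eqxx nth_hopset.
  case: eqP => // _; case: eqP => [hh|_]; last by rewrite h2.
  lia.
- rewrite map_inj_in_uniq; first by apply: filter_uniq; exact: iota_uniq.
  move=> i j; rewrite !mem_filter => /andP[/andP[hi _] _] /andP[/andP[hj _] _] e.
  case: (eqVneq i j) => // hij.
  have h1 : nth false (hopset c i) i = false by rewrite nth_hopset (ltn_eqF (ltnSn i)) eqxx.
  have h2 : nth false (hopset c j) i = true.
    rewrite nth_hopset (negbTE hij); case: ifP => // _; by case/andP: hi.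
  have e' : hopset c i = hopset c j := e.
  by rewrite e' h2 in h1.
Qed.

Lemma count_big (T : Type) (p : pred T) (s : seq T) : count p s = \sum_(i <- s) p i.
Proof. by elim: s => [|a s IH] /=; rewrite ?big_nil ?big_cons ?IH. Qed.

Lemma size_moves c : 0 < size c -> size (moves c) =
  ~~ nth false c 0 + nth false c (size c).-1 +
  \sum_(i <- iota 0 (size c).-1) (nth false c i && ~~ nth false c i.+1).
Proof.
move=> h; rewrite /moves !size_cat addnA; congr (_ + _ + _).
- by case: c h => [|[] s].
- by rewrite /exit_moves h /= nth_last; case: (last false c).
- by rewrite /hop_moves size_map size_filter count_big.
Qed.

Lemma hop_sw c c' i : size c' = size c -> i.+1 < size c ->
  ((hopset c' i == c) && (nth false c' i && ~~ nth false c' i.+1)) =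
  (~~ nth false c i && nth false c i.+1 && (c' == hopb c i)).
Proof.
move=> hs h.
have h' : i.+1 < size c' by rewrite hs.
have hu : size (take i c) = i by rewrite size_takel //; apply: leq_trans (leqnSn _) (ltnW h).
have hu' : size (take i c') = i by rewrite size_takel //; apply: leq_trans (leqnSn _) (ltnW h').
move: (decomp2 h) hu; move: (take i c) (nth false c i) (nth false c i.+1) (drop i.+2 c).
move=> u x y v -> hu.
move: (decomp2 h') hu'; move: (take i c') (nth false c' i) (nth false c' i.+1) (drop i.+2 c').
move=> u' x' y' v' -> hu'.
have e1 : hopset (u' ++ [:: x', y' & v']) i = u' ++ [:: false, true & v'] by rewrite -hu' hopset_cat.
have e2 : hopb (u ++ [:: x, y & v]) i = u ++ [:: true, false & v] by rewrite -hu hopb_cat.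
rewrite e1 e2 !eqseq_cat ?hu ?hu' // !eqseq_cons.
clear e1 e2; by case: x; case: y; case: x'; case: y'; rewrite /= ?andbF ?andbT.
Qed.

Lemma W_bwd c c' : size c' = size c -> 0 < size c ->
  W c' c = (nth false c 0 && (c' == set_nth false c 0 false)) +
           (~~ nth false c (size c).-1 && (c' == set_nth false c (size c).-1 true)) +
           \sum_(i <- iota 0 (size c).-1)
              (~~ nth false c i && nth false c i.+1 && (c' == hopb c i)).
Proof.
move=> hs h; rewrite /W -count_uniq_mem ?moves_uniq // /moves !count_cat addnA.
congr (_ + _ + _).
- case: c' hs => [|x' s'] //; case: c h => [|x s] // _ /= [hs].
  by case: x; case: x' => /=; rewrite ?addn0 ?eqseq_cons /= ?andbF.
- case/lastP: c' hs h => [|u' x']; first by move=> <-.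
  case/lastP: c => [|u x] //; rewrite !size_rcons => -[hs] _.
  rewrite /exit_moves size_rcons last_rcons /= -!cats1 -hs set_nth_cat.
  rewrite hs nth_cat_sz set_nth_cat.
  case: x; case: x' => /=; rewrite ?eqseq_cat ?hs // ?eqseq_cons /= ?addn0 ?andbF ?andbT. all: try reflexivity.
- rewrite /hop_moves count_map count_filter count_big hs !big_seq; apply: eq_bigr => i.
  rewrite mem_iota => /andP[_ hi].
  have hi' : i.+1 < size c by move: hi; rewrite add0n; case: (size c) h.
  have := hop_sw hs hi'; rewrite /hopset /= => <-; reflexivity.
Qed.

Lemma sum_tuple_pick n (F : seq bool -> nat) (X : seq bool) (b : bool) : size X = n ->
  \sum_(C' : n.-tuple bool) F (tval C') * (b && (tval C' == X)) = b * F X.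
Proof.
move=> hX; case: b; last by rewrite big1 // => C' _; rewrite muln0.
have hX' : size X == n by apply/eqP.
rewrite (bigD1 (Tuple hX')) //= eqxx muln1 mul1n big1 ?addn0 // => C' hC'.
case: eqP => [e|]; last by rewrite muln0.
have eC : C' = Tuple hX' by apply: val_inj.
by rewrite eC eqxx in hC'.
Qed.

Lemma sum_W_fwd n c : size c = n -> \sum_(C' : n.-tuple bool) W c (tval C') = size (moves c).
Proof.
move=> hc.
have -> : \sum_(C' : n.-tuple bool) W c (tval C') =
          \sum_(C' : n.-tuple bool) \sum_(y <- moves c) (y == tval C').
  apply: eq_bigr => C' _; rewrite /W -count_uniq_mem ?moves_uniq // count_big.
  by apply: eq_bigr.
rewrite exchange_big /= -sum1_size !big_seq; apply: eq_bigr => y hy.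
have H := sum_tuple_pick (fun _ => 1) true (moves_size hy); rewrite hc in H.
apply: etrans (_ : _ = true * 1) _; last by [].
rewrite -H; apply: eq_bigr => C' _; by rewrite mul1n eq_sym.
Qed.

Theorem proposition2 (n : nat) (hn : 1 <= n)
  (fib : n.-tuple bool -> list ptree)
  (hfib : forall C : n.-tuple bool,
            enumerates (fun t => inT n t /\ redconf t = tval C) (fib C))
  (C : n.-tuple bool) :
  (List.length (fib C) * \sum_(C' : n.-tuple bool) W (tval C) (tval C'))%N =
  (\sum_(C' : n.-tuple bool) List.length (fib C') * W (tval C') (tval C))%N.
Proof.
have hc : size (tval C) = n by rewrite size_tuple.
rewrite (length_fib hfib C) (sum_W_fwd hc).
have -> : \sum_(C' : n.-tuple bool) List.length (fib C') * W (tval C') (tval C) =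
   \sum_(C' : n.-tuple bool) G (tval C') * W (tval C') (tval C).
  by apply: eq_bigr => C' _; rewrite (length_fib hfib C').
move: (tval C) hc => c hc.
have h0 : 0 < size c by rewrite hc.
set m := (size c).-1.
have hm : size c = m.+1 by rewrite /m prednK.
rewrite size_moves // -/m.
rewrite (eq_bigr (fun C' : n.-tuple bool =>
   G (tval C') * (nth false c 0 && (tval C' == set_nth false c 0 false)) +
   G (tval C') * (~~ nth false c m && (tval C' == set_nth false c m true)) +
   \sum_(i <- iota 0 m) G (tval C') * (~~ nth false c i && nth false c i.+1 && (tval C' == hopb c i)))); last first.
  move=> C' _; rewrite (W_bwd (c:=c) (c':=tval C')) //; last by rewrite size_tuple hc.
  by rewrite -/m !mulnDr big_distrr.
rewrite !big_split /= exchange_big /=.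
rewrite !sum_tuple_pick; first last.
- by rewrite size_set_nth -hc; apply/maxn_idPr.
- by rewrite size_set_nth -hc hm; apply/maxn_idPr.
have -> : \sum_(j <- iota 0 m) \sum_(C' : n.-tuple bool)
    G (tval C') * (~~ nth false c j && nth false c j.+1 && (tval C' == hopb c j)) =
  \sum_(j <- iota 0 m) (~~ nth false c j && nth false c j.+1) * G (hopb c j).
  rewrite !big_seq; apply: eq_bigr => j; rewrite mem_iota add0n => /andP[_ hj].
  rewrite sum_tuple_pick // /hopb !size_set_nth -hc.
  have h1 : j.+1 <= size c by rewrite hm ltnS ltnW.
  have h2 : j.+2 <= size c by rewrite hm ltnS.
  by rewrite (elimT maxn_idPr h1) (elimT maxn_idPr h2).
have [L1 L2] := left_bd h0; have [R1 R2] := right_bd hm.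
rewrite !mulnDr big_distrr /= L1 R1 L2 R2.
have := @telescope (fun i => nth false c i * G (rem_at c i)) (fun i => ~~ nth false c i * G (rem_at c i))
   (fun i => (~~ nth false c i && nth false c i.+1) * G (hopb c i))
   (fun i => G c * (nth false c i && ~~ nth false c i.+1)) m.
move=> T; rewrite /= in T; rewrite T //.
move=> i hi; apply: step; by rewrite hm.
Qed.
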